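(* Let $I\subset S=K[x_1,\dots,x_n]$ be a matroidal ideal generated in degree two. Then $\mathrm{HS}_k(I)$ is a matroidal ideal for all $k\ge0$.
   Context: A polymatroidal ideal is a monomial ideal $I$ generated in a single degree such that for all $u,v\in G(I)$ and every $i$ with $\deg_{x_i}(u)>\deg_{x_i}(v)$ there exists $j$ with $\deg_{x_j}(u)<\deg_{x_j}(v)$ and $x_ju/x_i\in G(I)$; a matroidal ideal is a squarefree polymatroidal ideal. $\mathrm{HS}_k(I)$ is the monomial ideal generated by $\mathbf x^{\mathbf a}$ for the $k$th multigraded shifts $\mathbf a$ of $I$ (i.e. $F_k=\bigoplus_jS(-\mathbf a_{kj})$ in the minimal multigraded free resolution). By convention the zero ideal is allowed (for $k$ beyond the projective dimension). *)

(* Defs.v *)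
From HB Require Import structures.
From mathcomp Require Import all_boot all_order all_algebra.
Set Implicit Arguments. Unset Strict Implicit. Unset Printing Implicit Defensive.
Import GRing.Theory.

(** Monomials of S = K[x_1,...,x_n] are identified with exponent vectors
    (variables indexed by 'I_n). *)
Definition mon (n : nat) := {ffun 'I_n -> nat}.

Section Monomials.
Variable n : nat.

Definition mdiv (u v : mon n) : bool := [forall i, u i <= v i].

Definition mdeg (u : mon n) : nat := \sum_(i < n) u i.

(** x_j * u / x_i  (used when u i >= 1) *)
Definition mexch (u : mon n) (i j : 'I_n) : mon n :=
  [ffun l => (u l - (l == i)) + (l == j)].

(** A monomial ideal is described by the predicate "x^u \in J" on monomials.
    G(J): the minimal monomial generators of J. *)
Definition mingen (J : mon n -> Prop) (u : mon n) : Prop :=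
  J u /\ forall v, J v -> mdiv v u -> v = u.

Definition generated_in_degree (J : mon n -> Prop) (d : nat) : Prop :=
  forall u, mingen J u -> mdeg u = d.

Definition polymatroidal (J : mon n -> Prop) : Prop :=
  (exists d, generated_in_degree J d) /\
  forall u v, mingen J u -> mingen J v ->
    forall i : 'I_n, v i < u i ->
      exists j : 'I_n, u j < v j /\ mingen J (mexch u i j).

Definition matroidal (J : mon n -> Prop) : Prop :=
  polymatroidal J /\ forall u, mingen J u -> forall i, u i <= 1.

Definition gen_ideal (gens : seq (mon n)) (m : mon n) : bool :=
  has (fun g => mdiv g m) gens.

(** Multigraded Betti numbers of I = (gens), defined as
    beta_{k,a}(I) = dim_K Tor_k^S(K, I)_a, computed as the degree-a part of the
    homology of the Koszul complex K(x_1..x_n; S) (x) I.  Its degree-a part in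
    homological degree k has basis e_F (x) x^(a - F) for F \subset [n], |F| = k,
    F \subset supp a and x^(a-F) \in I; the differential is
    e_F (x) m |-> sum_{j in F} (-1)^{#{l in F, l < j}} e_{F \ j} (x) x_j m. *)
Definition indic (F : {set 'I_n}) : mon n := [ffun i => (i \in F) : nat].

Definition kbasis (gens : seq (mon n)) (a : mon n) (F : {set 'I_n}) : bool :=
  [forall i in F, 0 < a i] &&
  gen_ideal gens [ffun i => a i - indic F i].

Variable K : fieldType.

Definition kdiff_entry (gens : seq (mon n)) (k : nat) (a : mon n)
  (F E : {set 'I_n}) : K :=
  if [&& kbasis gens a F, kbasis gens a E & #|F| == k] then
    (\sum_(j in F | E == F :\ j) (-1) ^+ #|[set l in F | (l < j)%N]|)%R
  else 0%R.

Definition NS := #|{: {set 'I_n}}|.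

(** matrix of the k-th differential (row-vector convention), rows/columns
    indexed by all subsets of [n] (rows/columns outside the basis are zero) *)
Definition kdiff (gens : seq (mon n)) (k : nat) (a : mon n) : 'M[K]_NS :=
  \matrix_(p < NS, q < NS)
     kdiff_entry gens k a (enum_val p) (enum_val q).

Definition kdim (gens : seq (mon n)) (k : nat) (a : mon n) : nat :=
  #|[set F : {set 'I_n} | kbasis gens a F & #|F| == k]|.

(** dim H_k = dim C_k - rank d_k - rank d_{k+1} *)
Definition betti (gens : seq (mon n)) (k : nat) (a : mon n) : nat :=
  kdim gens k a - \rank (kdiff gens k a) - \rank (kdiff gens k.+1 a).

(** HS_k(I): the monomial ideal generated by the x^a with a a k-th multigraded
    shift of I, i.e. beta_{k,a}(I) <> 0. *)
Definition HS (gens : seq (mon n)) (k : nat) (m : mon n) : Prop :=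
  exists a : mon n, betti gens k a <> 0%N /\ mdiv a m.

End Monomials.

(* Main.v *)
Require Import Defs.
From HB Require Import structures.
From mathcomp Require Import all_boot all_order all_algebra.
From mathcomp Require Import ring.
From Stdlib Require Import Classical.
Set Implicit Arguments. Unset Strict Implicit. Unset Printing Implicit Defensive.
Import GRing.Theory.
Local Open Scope ring_scope.

Section Signs.
Variable n : nat.
Variable K : fieldType.
Implicit Types (F E G X : {set 'I_n}) (i j l : 'I_n).

Definition sgn (j : 'I_n) (F : {set 'I_n}) : K :=
  (-1) ^+ #|[set l in F | (l < j)%N]|.
Definition bd (F E : {set 'I_n}) : K := \sum_(j in F | E == F :\ j) sgn j F.

Lemma sgnK j F : sgn j F * sgn j F = 1.
Proof. by rewrite /sgn -exprD -signr_odd addnn odd_double. Qed.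

Lemma sgn_neq0 j F : sgn j F != 0.
Proof. by rewrite /sgn signr_eq0. Qed.

Lemma sgn_del j l G : l \in G -> j != l ->
  sgn j (G :\ l) = if (l < j)%N then - sgn j G else sgn j G.
Proof.
move=> lG jl; rewrite /sgn; case: ifP => lj.
  have -> : #|[set m in G | (m < j)%N]| = (#|[set m in G :\ l | (m < j)%N]|).+1.
    rewrite (cardsD1 l [set m in G | (m < j)%N]) inE lG lj /= add1n; congr (_.+1).
    by apply: eq_card => m; rewrite !inE andbA.
  by rewrite exprS mulN1r opprK.
congr (_ ^+ _); apply: eq_card => m; rewrite !inE.
by case: eqP => [->|]; rewrite ?lj ?andbF.
Qed.

Lemma sgn_swap j l G : j \in G -> l \in G -> j != l ->
  sgn j G * sgn l (G :\ j) = - (sgn l G * sgn j (G :\ l)).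
Proof.
move=> jG lG jl; have lj : l != j by rewrite eq_sym.
rewrite (sgn_del jG lj) (sgn_del lG jl).
case: (ltngtP j l) => h.
- ring.
- ring.
- by case/eqP: jl; apply: val_inj.
Qed.

Lemma sgn_cone i j X : i \in X -> j \in X -> i != j ->
  sgn j (X :\ i) * sgn i (X :\ j) + sgn i X * sgn j X = 0.
Proof.
move=> iX jX ij; have ji : j != i by rewrite eq_sym.
rewrite (sgn_del iX ji) (sgn_del jX ij).
case: (ltngtP i j) => h.
- ring.
- ring.
- by case/eqP: ij; apply: val_inj.
Qed.

Lemma setD1_inj (F : {set 'I_n}) j l : j \in F -> l \in F ->
  (F :\ j == F :\ l) = (j == l).
Proof.
move=> jF lF; apply/eqP/eqP => [E|->//]; apply/eqP; apply: contraT => ne.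
have : j \in F :\ l by rewrite !inE ne jF.
by rewrite -E !inE eqxx.
Qed.

Lemma bd_del F j : j \in F -> bd F (F :\ j) = sgn j F.
Proof.
move=> jF; rewrite /bd (big_pred1 j) // => l /=.
case lF: (l \in F) => /=; first by rewrite setD1_inj // eq_sym.
by apply/esym/eqP => lj; rewrite -lj lF in jF.
Qed.

Lemma bd_sub F E : bd F E != 0 -> exists2 j, j \in F & E = F :\ j.
Proof.
move=> H; case: (pickP (fun j => (j \in F) && (E == F :\ j))) => [j /andP[jF /eqP ->]|none].
  by exists j.
by move: H; rewrite /bd big1 ?eqxx // => j; rewrite none.
Qed.

Lemma sum_pred1_cond (T : finType) (X : T) (b : bool) (g : T -> K) :
  \sum_F (if b && (F == X) then g F else 0) = if b then g X else 0.
Proof.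
case: b => /=; last by rewrite big1.
by rewrite -big_mkcond (big_pred1 X).
Qed.

Lemma antisym0 (f : 'I_n -> 'I_n -> K) :
  (forall j l, j != l -> f j l = - f l j) ->
  \sum_j \sum_l (if j != l then f j l else 0) = 0.
Proof.
move=> Hf.
have E : forall j, \sum_l (if j != l then f j l else 0) =
   \sum_(l : 'I_n) (if (l < j)%N then f j l else 0) + \sum_(l : 'I_n) (if (j < l)%N then f j l else 0).
  move=> j; rewrite -big_split; apply: eq_bigr => l _ /=.
  have -> : (j != l) = (j < l)%N || (l < j)%N by rewrite -val_eqE neq_ltn.
  case: ltngtP => h; rewrite ?addr0 ?add0r //.
under eq_bigr do rewrite E.
rewrite big_split /= [X in _ + X]exchange_big /= -big_split /=.
apply: big1 => j _; rewrite -big_split; apply: big1 => l _ /=.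
case: ifP => h; last by rewrite addr0.
rewrite Hf ?addNr //.
by apply/eqP => e; rewrite e ltnn in h.
Qed.

Lemma bd_exch (G E : {set 'I_n}) (g : {set 'I_n} -> K) :
  \sum_F bd G F * g F = \sum_(j in G) sgn j G * g (G :\ j).
Proof.
under eq_bigr do rewrite /bd big_distrl /= big_mkcond /=.
rewrite exchange_big /= [RHS]big_mkcond /=; apply: eq_bigr => j _.
rewrite -(sum_pred1_cond (G :\ j) (j \in G) (fun F => sgn j G * g F)).
by apply: eq_bigr => F _; rewrite eq_sym; case: (j \in G).
Qed.

Lemma bdbd G E : \sum_F bd G F * bd F E = 0.
Proof.
rewrite bd_exch //.
pose f j l := if [&& j \in G, l \in G & E == G :\ j :\ l]
              then sgn j G * sgn l (G :\ j) else 0.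
transitivity (\sum_j \sum_l (if j != l then f j l else 0)).
  rewrite big_mkcond /=; apply: eq_bigr => j _.
  case jG: (j \in G); last first.
    by rewrite big1 // => l _; rewrite /f jG; case: ifP.
  rewrite /bd big_distrr /= big_mkcond /=; apply: eq_bigr => l _.
  rewrite /f jG !inE [l == j]eq_sym.
  by case: (j != l); case: (l \in G); case: (E == _); rewrite /= ?mulr0.
apply: antisym0 => j l jl; rewrite /f.
have -> : G :\ l :\ j = G :\ j :\ l by rewrite !setDDl setUC.
case: (j \in G) / idP => jG; case: (l \in G) / idP => lG; rewrite /= ?oppr0 //.
by case: (E == _); rewrite ?oppr0 // sgn_swap.
Qed.

End Signs.
Section Mat.
Variable n : nat.
Variable K : fieldType.
Variable gens : seq (mon n).
Implicit Types (F E G X : {set 'I_n}) (a : mon n).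

Definition ev (c : 'I_(NS n)) : {set 'I_n} := enum_val c.

Lemma sum_ev (g : {set 'I_n} -> K) : \sum_(c < NS n) g (ev c) = \sum_F g F.
Proof. by rewrite /ev /NS -(big_enum_val (A := predT)). Qed.

Lemma sum_delta (T : finType) (X : T) (g : T -> K) :
  \sum_Y (Y == X)%:R * g Y = g X.
Proof.
rewrite (bigD1 X) //= eqxx mul1r big1 ?addr0 // => Y /negbTE ->.
by rewrite mul0r.
Qed.

Lemma sum_delta_in (T : finType) (A : {pred T}) (X : T) (g : T -> K) :
  \sum_(Y in A) (Y == X)%:R * g Y = if X \in A then g X else 0.
Proof.
rewrite big_mkcond /= -(sum_delta X (fun Y => if Y \in A then g Y else 0)).
apply: eq_bigr => Y _; case: eqVneq => [->|ne];
  by case: (_ \in A); rewrite ?mul0r ?mulr0.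
Qed.

Lemma mxrank_addle m p (A B : 'M[K]_(m, p)) : (\rank (A + B)%R <= \rank A + \rank B)%N.
Proof.
have h1 := mxrankS (addmx_sub_adds (submx_refl A) (submx_refl B)).
have h2 := (mxrank_adds_leqif A B).1.
exact: leq_trans h1 h2.
Qed.

Definition smx (f : {set 'I_n} -> {set 'I_n} -> K) : 'M[K]_(NS n) :=
  \matrix_(p, q) f (ev p) (ev q).

Lemma smx_mul f g :
  smx f *m smx g = smx (fun P Q => \sum_X f P X * g X Q).
Proof.
apply/matrixP => p q; rewrite !mxE.
under eq_bigr do rewrite !mxE.
exact: (sum_ev (fun X => f (ev p) X * g X (ev q))).
Qed.

Lemma smx_add f g :
  smx f + smx g = smx (fun P Q => f P Q + g P Q).
Proof. by apply/matrixP => p q; rewrite !mxE. Qed.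

Lemma kdiff_smx k a : kdiff K gens k a = smx (kdiff_entry K gens k a).
Proof. by []. Qed.

Lemma betti0 k a (h : {set 'I_n} -> {set 'I_n} -> K) :
  (forall F G, kbasis gens a F -> #|F| = k ->
    \sum_E kdiff_entry K gens k a F E * h E G
    + \sum_E h F E * kdiff_entry K gens k.+1 a E G = (F == G)%:R) ->
  betti K gens k a = 0%N.
Proof.
move=> Hh.
set B := [set F | kbasis gens a F & #|F| == k].
pose Emx : 'M[K]_(#|B|, NS n) :=
  \matrix_(r, c) ((ev c == (enum_val r : {set 'I_n}))%:R).
pose H : 'M[K]_(NS n) := smx h.
pose D := kdiff K gens k a.
pose D' := kdiff K gens k.+1 a.
have E1 : Emx *m (D *m H + H *m D') = Emx.
  rewrite /D /D' /H !kdiff_smx !smx_mul smx_add.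
  apply/matrixP => r c; rewrite !mxE.
  have rB : (enum_val r : {set 'I_n}) \in B by apply: enum_valP.
  rewrite inE in rB; case/andP: rB => kbr /eqP cr.
  under eq_bigr do rewrite !mxE.
  rewrite (sum_ev (fun P => (P == enum_val r)%:R *
     ((\sum_X (kdiff_entry K gens k a P X) * h X (ev c))
       + \sum_X h P X * kdiff_entry K gens k.+1 a X (ev c)))).
  by rewrite sum_delta Hh // eq_sym.
have E2 : Emx *m Emx^T = 1%:M.
  apply/matrixP => r r'; rewrite !mxE.
  under eq_bigr do rewrite !mxE.
  rewrite (sum_ev (fun X => (X == enum_val r)%:R * (X == enum_val r')%:R)).
  rewrite sum_delta; congr (_%:R).
  by rewrite (inj_eq enum_val_inj).
have L1 : (#|B| <= \rank Emx)%N.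
  by rewrite -{1}(mxrank1 K #|B|) -E2 mxrankM_maxl.
have L2 : (\rank Emx <= \rank D + \rank D')%N.
  rewrite -{1}E1 mulmxDr !mulmxA.
  apply: leq_trans (mxrank_addle _ _) _.
  apply: leq_add.
    by apply: leq_trans (mxrankM_maxl _ _) _; apply: mxrankM_maxr.
  exact: mxrankM_maxr.
rewrite /betti /kdim -/B -subnDA; apply/eqP; rewrite subn_eq0.
exact: leq_trans L1 L2.
Qed.

Lemma betti_neq0 k a (f : {set 'I_n} -> K) F0 :
  (forall F E, kdiff_entry K gens k.+1 a F E = 0) ->
  (forall F, f F != 0 -> kbasis gens a F && (#|F| == k)) ->
  f F0 != 0 ->
  (forall E, \sum_F f F * kdiff_entry K gens k a F E = 0) ->
  betti K gens k a != 0%N.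
Proof.
move=> HD' Hsupp HF0 Hcyc.
set B := [set F | kbasis gens a F & #|F| == k].
pose Emx : 'M[K]_(#|B|, NS n) :=
  \matrix_(r, c) ((ev c == (enum_val r : {set 'I_n}))%:R).
pose D := kdiff K gens k a.
have D'0 : kdiff K gens k.+1 a = 0.
  by apply/matrixP => p q; rewrite !mxE HD'.
have F0B : F0 \in B by rewrite inE Hsupp.
have sumB : forall g : {set 'I_n} -> K,
    \sum_(r < #|B|) g (enum_val r) = \sum_(X in B) g X.
  by move=> g; rewrite (big_enum_val (A := mem B)).
have ED : D = Emx^T *m (Emx *m D).
  apply/matrixP => p c; rewrite [LHS]mxE [RHS]mxE.
  transitivity (\sum_(r < #|B|) (ev p == enum_val r)%:R *
                  kdiff_entry K gens k a (enum_val r) (ev c)); last first.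
    apply: eq_bigr => r _; rewrite !mxE; congr (_ * _); symmetry.
    transitivity (\sum_X (X == enum_val r)%:R * kdiff_entry K gens k a X (ev c)).
      rewrite /D /Emx; under eq_bigr do rewrite !mxE.
      exact: (sum_ev (fun X => (X == enum_val r)%:R * kdiff_entry K gens k a X (ev c))).
    exact: sum_delta.
  rewrite (sumB (fun X => (ev p == X)%:R * kdiff_entry K gens k a X (ev c))).
  under eq_bigr do rewrite eq_sym.
  rewrite (@sum_delta_in _ B (ev p) (fun X => kdiff_entry K gens k a X (ev c))).
  case: ifP => // /negbT; rewrite inE /kdiff_entry.
  by case: (kbasis gens a (ev p)); case: (#|ev p| == k); rewrite ?andbF.
pose y : 'rV[K]_#|B| := \row_r f (enum_val r).
have yE : y *m Emx = \row_c f (ev c).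
  apply/matrixP => i c; rewrite !mxE.
  under eq_bigr do rewrite !mxE.
  rewrite (sumB (fun X => f X * (ev c == X)%:R)).
  under eq_bigr do rewrite mulrC eq_sym.
  rewrite (@sum_delta_in _ B (ev c) f); case: ifP => // /negbT cB.
  apply/eqP; apply: contraNT cB => H; rewrite inE; apply: Hsupp; by rewrite eq_sym.
have yD : y *m (Emx *m D) = 0.
  rewrite mulmxA yE; apply/matrixP => i c; rewrite !mxE.
  under eq_bigr do rewrite !mxE.
  rewrite (sum_ev (fun X => f X * kdiff_entry K gens k a X (ev c))).
  exact: Hcyc.
have y0 : y != 0.
  apply/eqP => /matrixP /(_ 0 (enum_rank_in F0B F0)).
  rewrite !mxE enum_rankK_in //.
  by move/eqP; rewrite (negbTE HF0).
have Hker : (y <= kermx (Emx *m D))%MS by rewrite sub_kermx yD.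
have := mxrankS Hker; rewrite rank_rV y0 mxrank_ker => H1.
have H2 : (\rank D <= \rank (Emx *m D))%N by rewrite {1}ED mxrankM_maxr.
rewrite /betti /kdim -/B -/D D'0 mxrank0 subn0 -lt0n subn_gt0.
apply: leq_ltn_trans H2 _.
by rewrite -subn_gt0.
Qed.

End Mat.
Section Cone.
Variable n : nat.
Variable K : fieldType.
Variable gens : seq (mon n).
Implicit Types (F E G X : {set 'I_n}) (a u v m : mon n) (i j l : 'I_n).

Lemma mdiv_refl u : mdiv u u.
Proof. by apply/forallP => i. Qed.

Lemma mdiv_trans u v m : mdiv u v -> mdiv v m -> mdiv u m.
Proof.
move=> /forallP H1 /forallP H2; apply/forallP => i.
exact: leq_trans (H1 i) (H2 i).
Qed.

Lemma J_up u m : mdiv u m -> gen_ideal gens u -> gen_ideal gens m.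
Proof.
move=> um /hasP [g gin gu]; apply/hasP; exists g => //.
exact: mdiv_trans gu um.
Qed.

Lemma kb_down a F E : kbasis gens a F -> E \subset F -> kbasis gens a E.
Proof.
case/andP => /forall_inP Fpos JF EF; apply/andP; split.
  by apply/forall_inP => x xE; apply: Fpos; apply: (subsetP EF).
apply: J_up JF; apply/forallP => x; rewrite /indic !ffunE.
apply: leq_sub2l.
by case xE: (x \in E) => //; rewrite (subsetP EF x xE).
Qed.

Lemma entry_bd k a F E : kbasis gens a F -> #|F| = k ->
  kdiff_entry K gens k a F E = bd K F E.
Proof.
move=> kF cF; rewrite /kdiff_entry kF cF eqxx /=.
case kE: (kbasis gens a E) => //.
apply/esym/eqP; apply: contraFT kE => /bd_sub [j jF ->].
by apply: kb_down kF _; apply: subD1set.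
Qed.

Lemma setU1D1 i l F : l != i -> (i |: F) :\ l = i |: (F :\ l).
Proof.
move=> li; apply/setP => x; rewrite !inE.
by case: (x =P i) => [->|]; rewrite ?orbT ?orbF // eq_sym li.
Qed.

Lemma cone_betti k a i : (0 < a i)%N ->
  (forall F, kbasis gens a F -> i \notin F -> kbasis gens a (i |: F)) ->
  betti K gens k a = 0%N.
Proof.
move=> ai Hcone.
apply: (betti0 (h := fun E G => if (i \notin E) && (G == i |: E)
                                 then sgn K i G else 0)).
move=> F G kF cF.
under eq_bigr do rewrite entry_bd //.
rewrite (bd_exch _ G).
case iF: (i \in F).
  rewrite [X in _ + X]big1 ?addr0; last by move=> E _; rewrite /= mul0r.
  rewrite (bigD1 i) //= big1 ?addr0; last first.
    by move=> j /andP [jF ji]; rewrite !inE eq_sym ji iF /= mulr0.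
  rewrite !inE eqxx /= setD1K //.
  case: (G =P F) => [->|ne]; first by rewrite eqxx sgnK.
  by rewrite mulr0; case: eqP => // e; case: ne.
have kX : kbasis gens a (i |: F) by exact: Hcone kF (negbT iF).
have cX : #|(i |: F)| = k.+1 by rewrite cardsU1 iF cF.
rewrite [X in _ + X](bigD1 (i |: F)) //= [X in _ + (_ + X)]big1 ?addr0; last first.
  by move=> E nE; rewrite (negbTE nE) mul0r.
rewrite eqxx entry_bd // /bd.
have iF' : i \notin F by rewrite iF.
have eF : (i |: F) :\ i = F by rewrite setU1K.
rewrite [X in _ + _ * X]big_mkcondr /= big_setU1 //= eF.
rewrite mulrDr addrCA big_distrr /= -big_split /= big1 ?add0r; last first.
  move=> j jF; have ji : j != i by apply: contraNneq iF' => <-.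
  have iX : i \in (i |: F) by rewrite setU11.
  have jX : j \in (i |: F) by rewrite setU1r.
  have eX : (i |: F) :\ j = i |: (F :\ j) by rewrite setU1D1.
  have -> : i \notin F :\ j by rewrite !inE iF andbF.
  rewrite eX /=; case: eqP => [->|_]; last by rewrite !mulr0 addr0.
  have ij : i != j by rewrite eq_sym.
  have := sgn_cone K iX jX ij.
  by rewrite eF eX.
rewrite addr0 [F == G]eq_sym; case: eqP => _; first by rewrite sgnK.
by rewrite mulr0.
Qed.
End Cone.
Section Ideal.
Variable n : nat.
Variable K : fieldType.
Variable gens : seq (mon n).
Local Notation J := (fun m : mon n => gen_ideal gens m).
Hypothesis HM : matroidal J.
Hypothesis HD : generated_in_degree J 2.
Implicit Types (F E G X S T : {set 'I_n}) (a u v m : mon n) (i j l x y : 'I_n).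

Lemma mdeg_lt v m : mdiv v m -> v != m -> (mdeg v < mdeg m)%N.
Proof.
move=> /forallP vm ne.
have [i lt] : exists i, (v i < m i)%N.
  apply/existsP; apply: contraNT ne; rewrite negb_exists => /forallP H.
  apply/eqP/ffunP => i; apply/eqP; rewrite eqn_leq vm /=.
  by rewrite leqNgt; apply: H.
rewrite /mdeg (bigD1 i) //= [X in (_ < X)%N](bigD1 i) //= -addSn.
by apply: leq_add => //; apply: leq_sum => l _.
Qed.

Lemma ex_mingen m : J m -> exists u, mingen J u /\ mdiv u m.
Proof.
move: {2}(mdeg m) (erefl (mdeg m)) => d; elim/ltn_ind: d m => d IH m dm Jm.
case: (Classical_Prop.classic (forall v, J v -> mdiv v m -> v = m)) => [H|H].
  by exists m; split => //; apply: mdiv_refl.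
have [v Hv] : exists v, ~ (J v -> mdiv v m -> v = m).
  by apply: Classical_Pred_Type.not_all_ex_not.
have Jv : J v by apply: Classical_Prop.NNPP => nJ; apply: Hv => /nJ.
have vm : mdiv v m by apply: Classical_Prop.NNPP => nv; apply: Hv => _ /nv.
have ne : v != m by apply/eqP => e; apply: Hv.
have lt : (mdeg v < d)%N by rewrite -dm; exact: mdeg_lt vm ne.
have [u [mu uv]] := IH _ lt v erefl Jv.
by exists u; split => //; apply: mdiv_trans uv vm.
Qed.

Lemma mdeg_indic T : mdeg (indic T) = #|T|.
Proof.
rewrite /mdeg -sum1_card [RHS]big_mkcond /=; apply: eq_bigr => i _.
by rewrite ffunE; case: (i \in T).
Qed.

Lemma indic_div T m : mdiv (indic T) m = [forall x in T, (0 < m x)%N].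
Proof.
apply/forallP/forall_inP => H x.
  by move=> xT; have := H x; rewrite ffunE xT.
by rewrite ffunE; case xT: (x \in T) => //; apply: H.
Qed.

Definition edge x y := (x != y) && J (indic [set x; y]).

Lemma edge_sym x y : edge x y = edge y x.
Proof. by rewrite /edge eq_sym setUC. Qed.

Lemma mingen_edge u : mingen J u -> exists x y, edge x y /\ u = indic [set x; y].
Proof.
move=> mu; have sq := HM.2 u mu; have d2 := HD mu.
pose T := [set i | u i != 0%N].
have uT : u = indic T.
  apply/ffunP => i; rewrite ffunE inE; have := sq i.
  by case: (u i) => [|[|]].
move: d2; rewrite uT mdeg_indic => /eqP /cards2P [x [y [xy Txy]]].
exists x, y; rewrite /edge xy -Txy -uT; split => //.
by case: mu.
Qed.

Lemma J_edge m : J m <-> exists x y, [/\ edge x y, (0 < m x)%N & (0 < m y)%N].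
Proof.
split.
  case/ex_mingen => u [mu um]; have [x [y [exy ue]]] := mingen_edge mu.
  move: um; rewrite ue indic_div => /forall_inP H.
  by exists x, y; split => //; apply: H; rewrite !inE eqxx ?orbT.
case=> x [y [/andP [_ Jxy] mx my]]; apply: J_up Jxy.
by rewrite indic_div; apply/forall_inP => z; rewrite !inE => /orP [] /eqP ->.
Qed.

Lemma J_indic T : J (indic T) <-> exists x y, [/\ edge x y, x \in T & y \in T].
Proof.
rewrite J_edge; split; case=> x [y [e hx hy]]; exists x, y; split => //;
  by move: hx hy; rewrite !ffunE; case: (x \in T); case: (y \in T).
Qed.

Lemma edge_mingen x y : edge x y -> mingen J (indic [set x; y]).
Proof.
case/andP => xy Jxy; have [u [mu um]] := ex_mingen Jxy.
have [x' [y' [/andP [xy' _] ue]]] := mingen_edge mu.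
suff e : [set x'; y'] = [set x; y] by rewrite -e -ue.
move: um; rewrite ue indic_div => /forall_inP H.
have sub : [set x'; y'] \subset [set x; y].
  apply/subsetP => z zi; have := H z zi; rewrite ffunE.
  by case: (z \in [set x; y]).
by apply/eqP; rewrite eqEcard sub !cards2 xy xy'.
Qed.

Lemma exch x w p y : edge x w -> edge p y -> w != p -> w != y ->
  exists j, (j = p \/ j = y) /\ edge x j.
Proof.
move=> exw epy wp wy.
have mu := edge_mingen exw; have mv := edge_mingen epy.
have xw : x != w by case/andP: exw.
have lt : (indic [set p; y] w < indic [set x; w] w)%N.
  by rewrite !ffunE !inE eqxx orbT (negbTE wp) (negbTE wy).
have [j [ltj mj]] := HM.1.2 _ _ mu mv w lt.
move: ltj; rewrite !ffunE !inE.
case: (eqVneq j x) => [->|jx]; first by rewrite /= ltnNge leq_b1.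
case: (eqVneq j w) => [->|jw]; first by rewrite /= ?orbT ltnNge leq_b1.
move=> /= ltj.
have jpy : (j == p) || (j == y) by case: (_ || _) ltj.
exists j; split; first by case/orP: jpy => /eqP ->; [left|right].
suff e : mexch (indic [set x; w]) w j = indic [set x; j].
  rewrite /edge eq_sym jx /=; rewrite -e; by case: mj.
apply/ffunP => l; rewrite !ffunE !inE.
case: (l =P w) => [->|/eqP lw].
  by rewrite (eq_sym w x) (negbTE xw) (eq_sym w j) (negbTE jw).
rewrite orbF subn0; case: (eqVneq l x) => [->|lx].
  by rewrite (eq_sym x j) (negbTE jx).
by rewrite /= add0n.
Qed.

Lemma cone_cond a i : (0 < a i)%N -> (1 < a i)%N || ~~ [exists y, edge i y] ->
  forall F, kbasis gens a F -> i \notin F -> kbasis gens a (i |: F).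
Proof.
move=> ai hi F /andP [/forall_inP Fpos JF] iF; apply/andP; split.
  apply/forall_inP => l; rewrite !inE => /orP [/eqP -> //|]; exact: Fpos.
have key : forall z, (exists t, edge z t) ->
    (0 < [ffun l => a l - indic F l] z)%N ->
    (0 < [ffun l => a l - indic (i |: F) l] z)%N.
  move=> z [t]; rewrite !ffunE !inE.
  case: (eqVneq z i) => [->|zi] ezt /=.
    rewrite (negbTE iF) subn0 => _.
    case/orP: hi => [h|/existsPn h]; first by rewrite subn_gt0.
    by have := h t; rewrite ezt.
  done.
move/J_edge: JF => [x [y [exy hx hy]]]; apply/J_edge; exists x, y; split => //.
  by apply: key hx; exists y.
by apply: key hy; exists x; rewrite edge_sym.
Qed.

Definition valid k S :=
  [&& #|S| == k.+2, gen_ideal gens (indic S) & [forall x in S, [exists y, edge x y]]].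

Lemma betti_shift k a : betti K gens k a != 0%N ->
  exists S, valid k S && mdiv (indic S) a.
Proof.
move=> bne.
have Hsf : forall i, (0 < a i)%N -> (a i == 1%N) && [exists y, edge i y].
  move=> i ai; apply: contraNT bne => H; apply/eqP.
  apply: (@cone_betti _ K gens k a i) => //; apply: cone_cond => //.
  move: H; rewrite negb_and => /orP [h|->]; last by rewrite orbT.
  by rewrite ltn_neqAle eq_sym h ai.
have : (0 < kdim gens k a)%N.
  move: bne; rewrite /betti -lt0n => /leq_trans; apply.
  by rewrite -subnDA leq_subr.
rewrite /kdim card_gt0 => /set0Pn [F]; rewrite inE => /andP [kF /eqP cF].
move: (kF) => /andP [/forall_inP Fpos /J_edge [x [y [exy hx hy]]]].
move: hx hy; rewrite !ffunE.
have hz : forall z, (0 < a z - (z \in F))%N -> (z \notin F) && (0 < a z)%N.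
  move=> z; case zF: (z \in F) => /=; last by rewrite subn0.
  by have /andP [/eqP -> _] := Hsf z (Fpos z zF).
move/hz => /andP [xF ax] /hz /andP [yF ay].
have xy : x != y by case/andP: exy.
have posS : forall z, z \in x |: (y |: F) -> (0 < a z)%N.
  by move=> z; rewrite !inE => /or3P [/eqP->|/eqP->|/Fpos].
exists (x |: (y |: F)); apply/andP; split; last first.
  by rewrite indic_div; apply/forall_inP.
apply/and3P; split.
- by rewrite cardsU1 cardsU1 !inE negb_or xy xF yF cF.
- by apply/J_indic; exists x, y; split => //; rewrite !inE eqxx ?orbT.
- apply/forall_inP => z zS.
  by have /andP [_ ->] := Hsf z (posS z zS).
Qed.

Lemma kb_indic S F :
  kbasis gens (indic S) F = (F \subset S) && gen_ideal gens (indic (S :\: F)).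
Proof.
rewrite /kbasis; case sub: (F \subset S) => /=.
  rewrite (_ : [forall i in F, _] = true); last first.
    by apply/forall_inP => i iF; rewrite ffunE (subsetP sub).
  congr (gen_ideal gens _); apply/ffunP => i; rewrite !ffunE !inE.
  case iF: (i \in F) => /=; last by rewrite subn0.
  by rewrite (subsetP sub i iF).
apply/negbTE; move/negbT: sub; apply: contra => /andP [/forall_inP H _].
by apply/subsetP => i /H; rewrite ffunE; case: (i \in S).
Qed.

Lemma betti_valid k S : valid k S -> betti K gens k (indic S) != 0%N.
Proof.
move=> /and3P [/eqP cS JS /forall_inP nl].
have [p [q [epq pS qS]]] := (J_indic S).1 JS.
have pq : p != q by case/andP: epq.
pose P := [set x in S | (x == p) || ~~ edge x p].
have PS : forall x, x \in P -> x \in S by move=> x; rewrite inE => /andP [].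
have C1 : forall x y, x \in P -> y \in S -> y \notin P -> edge x y.
  move=> x y; rewrite !inE => /andP [xS hx] yS.
  rewrite yS /= negb_or negbK => /andP [yp eyp].
  case/orP: hx => [/eqP ->|nxp]; first by rewrite edge_sym.
  have [w exw] := existsP (nl x xS).
  case: (eqVneq w y) => [<-//|wy].
  have wp : w != p by apply: contraNneq nxp => <-.
  have epy : edge p y by rewrite edge_sym.
  have [j [[->|->] exj]] := exch exw epy wp wy => //.
  by rewrite exj in nxp.
pose z F := \sum_(x in P) sgn K x S * bd K (S :\ x) F.
have basis_pair : forall x y, x \in S -> y \in S -> edge x y ->
    kbasis gens (indic S) (S :\ x :\ y) && (#|S :\ x :\ y| == k).
  move=> x y xS yS exy; have xy : x != y by case/andP: exy.
  rewrite kb_indic; apply/andP; split; last first.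
    have h1 := cardsD1 x S; have h2 := cardsD1 y (S :\ x).
    move: h1 h2; rewrite !inE xS yS eq_sym xy cS /= => h1 h2.
    by rewrite h2 !add1n in h1; case: h1 => ->.
  apply/andP; split.
    by apply/subsetP => t; rewrite !inE => /andP [_ /andP [_ ->]].
  have -> : S :\: (S :\ x :\ y) = [set x; y].
    apply/setP => t; rewrite !inE.
    case: (eqVneq t x) => [->|tx]; first by rewrite xS /= !andbF.
    case: (eqVneq t y) => [->|ty]; first by rewrite yS.
    by rewrite /=; case: (t \in S).
  by case/andP: exy.
have supp : forall F, z F != 0 -> kbasis gens (indic S) F && (#|F| == k).
  move=> F; apply: contraNT => nb; apply/eqP.
  pose g x y := if [&& x \in P, y \in P & F == S :\ x :\ y]
                then sgn K x S * sgn K y (S :\ x) else 0.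
  transitivity (\sum_x \sum_y (if x != y then g x y else 0)).
    rewrite /z big_mkcond /=; apply: eq_bigr => x _.
    case xP: (x \in P); last by rewrite big1 // => y _; rewrite /g xP; case: ifP.
    rewrite /bd big_distrr /= big_mkcond /=; apply: eq_bigr => y _.
    rewrite /g xP in_setD1 /=.
    case: (eqVneq x y) => [<-|xy]; first by [].
    rewrite /=; case yP: (y \in P); first by rewrite (PS y yP).
    case yS: (y \in S) => //=.
    have := basis_pair x y (PS x xP) yS (C1 x y xP yS (negbT yP)).
    case: (F =P S :\ x :\ y) => [e H|_] //; by move: H; rewrite -e (negbTE nb).
  apply: antisym0 => x y xy; rewrite /g.
  have -> : S :\ y :\ x = S :\ x :\ y by rewrite !setDDl setUC.
  case xP: (x \in P); case yP: (y \in P); rewrite /= ?oppr0 //.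
  case: (F == _); rewrite ?oppr0 //.
  by rewrite sgn_swap // PS.
apply: (@betti_neq0 _ K gens k (indic S) z (S :\ p :\ q)).
- move=> F E; rewrite /kdiff_entry; case: ifP => // /and3P [kF _ /eqP cF].
  move: kF; rewrite kb_indic => /andP [sub /J_indic [x [y [exy xD yD]]]].
  have xy : x != y by case/andP: exy.
  have : (2 <= #|S :\: F|)%N.
    have c2 := cards2 x y; rewrite xy in c2; rewrite -c2; apply: subset_leq_card.
    by apply/subsetP => t; rewrite !inE => /orP [] /eqP ->; rewrite -in_setD.
  by rewrite cardsD (setIidPr sub) cS cF subSS subSnn.
- exact: supp.
- rewrite /z (bigD1 p) /=; last by rewrite inE pS eqxx.
  rewrite big1 ?addr0; last first.
    move=> x /andP [xP xp].
    have xS := PS x xP.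
    have qP : q \notin P.
      by rewrite inE qS /= (eq_sym q p) (negbTE pq) /= edge_sym epq.
    have xq : x != q by apply: contraNneq qP => <-.
    apply/eqP; rewrite mulf_eq0; apply/orP; right; apply: contraT => /bd_sub [j jS e].
    have : x \in S :\ p :\ q by rewrite !inE xq xp xS.
    by rewrite e !inE eqxx /= andbF.
  rewrite bd_del; last by rewrite !inE eq_sym pq qS.
  by rewrite mulf_neq0 // sgn_neq0.
- move=> E; transitivity (\sum_F z F * bd K F E).
    apply: eq_bigr => F _; case: (eqVneq (z F) 0) => [->|nz]; first by rewrite !mul0r.
    by have /andP [kF /eqP cF] := supp F nz; rewrite entry_bd.
  rewrite /z; under eq_bigr do rewrite big_distrl /=.
  rewrite exchange_big /=; apply: big1 => x _.
  under eq_bigr do rewrite -mulrA.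
  by rewrite -big_distrr /= bdbd mulr0.
Qed.
Lemma HS_char k m : HS K gens k m <-> exists S, valid k S && mdiv (indic S) m.
Proof.
split.
  case=> a [bne am]; have [S /andP [vS Sa]] := betti_shift (introN eqP bne).
  by exists S; rewrite vS; apply: mdiv_trans Sa am.
case=> S /andP [vS Sm]; exists (indic S); split => //.
exact/eqP/(betti_valid vS).
Qed.

Lemma indic_sub S T : mdiv (indic T) (indic S) -> T \subset S.
Proof.
rewrite indic_div => /forall_inP H; apply/subsetP => x /H.
by rewrite ffunE; case: (x \in S).
Qed.

Lemma mingen_HS k u : mingen (HS K gens k) u <-> exists S, valid k S /\ u = indic S.
Proof.
split.
  case=> Hu Hmin; have [S /andP [vS Su]] := (HS_char k u).1 Hu.
  exists S; split => //; apply/esym/Hmin => //.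
  by apply/HS_char; exists S; rewrite vS mdiv_refl.
case=> S [vS ->]; split; first by apply/HS_char; exists S; rewrite vS mdiv_refl.
move=> v /HS_char [T /andP [vT Tv]] vS'.
have TS : T \subset S := indic_sub (mdiv_trans Tv vS').
have eTS : T = S.
  apply/eqP; rewrite eqEcard TS.
  move: (vT) (vS) => /and3P [/eqP cT _ _] /and3P [/eqP cS _ _].
  by rewrite cT cS leqnn.
apply/ffunP => x; apply/eqP; rewrite eqn_leq.
move/forallP: vS' => -> /=; move/forallP: Tv => /(_ x).
by rewrite -eTS.
Qed.

Lemma valid_exch k G H i j : valid k G -> valid k H -> i \in G -> i \notin H ->
  j \in H -> j \notin G -> gen_ideal gens (indic (j |: (G :\ i))) ->
  valid k (j |: (G :\ i)).
Proof.
move=> /and3P [/eqP cG _ /forall_inP nG] /and3P [_ _ /forall_inP nH] iG iH jH jG J'.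
apply/and3P; split => //.
  rewrite cardsU1 !inE negb_and jG orbT /=.
  have := cardsD1 i G; rewrite iG cG add1n => [[->]].
  by [].
apply/forall_inP => z; rewrite !inE => /orP [/eqP ->|/andP [_ zG]].
  exact: nH.
exact: nG.
Qed.

Lemma exch_valid k G H i : valid k G -> valid k H -> i \in G -> i \notin H ->
  exists j, [/\ j \in H, j \notin G & valid k (j |: (G :\ i))].
Proof.
move=> vG vH iG iH.
move: (vG) (vH) => /and3P [/eqP cG JG _] /and3P [/eqP cH JH _].
have fin : forall j, j \in H -> j \notin G -> gen_ideal gens (indic (j |: (G :\ i))) ->
    exists j, [/\ j \in H, j \notin G & valid k (j |: (G :\ i))].
  move=> j jH jG J'; exists j; split => //; exact: (valid_exch vG vH iG iH jH jG J').
case: (boolP [exists x, exists y, [&& edge x y, x \in G :\ i & y \in G :\ i]]).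
  case/existsP => x /existsP [y /and3P [exy xG yG]].
  have cGi : #|G :\ i| = k.+1.
    by have := cardsD1 i G; rewrite iG cG add1n => [[<-]].
  have [j] : exists j, j \in H :\: G.
    apply/set0Pn; rewrite setD_eq0; apply/negP => HG.
    have HGi : H \subset G :\ i.
      apply/subsetP => t tH; rewrite !inE (subsetP HG t tH) andbT.
      by apply: contraNneq iH => <-.
    by have := subset_leq_card HGi; rewrite cH cGi ltnn.
  rewrite inE => /andP [jG jH]; apply: (fin j) => //.
  by apply/J_indic; exists x, y; split => //; rewrite inE ?xG ?yG orbT.
rewrite negb_exists => /forallP noA.
have [x [y [exy xG yG]]] := (J_indic G).1 JG.
have [r [eri rG]] : exists r, edge r i /\ r \in G.
  case: (eqVneq x i) => [exi|xi].
    by exists y; split => //; rewrite edge_sym -exi.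
  case: (eqVneq y i) => [eyi|yi].
    by exists x; split => //; rewrite -eyi.
  have := noA x; rewrite negb_exists => /forallP /(_ y).
  by rewrite exy !inE xi yi xG yG.
have [p [q [epq pH qH]]] := (J_indic H).1 JH.
have ip : i != p by apply: contraNneq iH => ->.
have iq : i != q by apply: contraNneq iH => ->.
have ri : r != i by case/andP: eri.
have [j [jpq erj]] := exch eri epq ip iq.
have jH : j \in H by case: jpq => ->.
have jG : j \notin G.
  apply/negP => jG.
  have ji : j != i by apply: contraNneq iH => <-.
  have := noA r; rewrite negb_exists => /forallP /(_ j).
  by rewrite erj !inE ri ji rG jG.
apply: (fin j) => //.
by apply/J_indic; exists r, j; split => //; rewrite !inE ?eqxx ?ri ?rG ?orbT.
Qed.

Lemma mexch_indic G i j : i \in G -> j \notin G ->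
  mexch (indic G) i j = indic (j |: (G :\ i)).
Proof.
move=> iG jG; apply/ffunP => l; rewrite !ffunE !inE.
case: (eqVneq l i) => [->|li].
  rewrite iG /=; case: (eqVneq i j) => [eij|//].
  by rewrite -eij iG in jG.
case: (eqVneq l j) => [->|lj]; first by rewrite (negbTE jG).
by rewrite /= subn0 addn0.
Qed.

End Ideal.

Local Close Scope ring_scope.

Theorem corollary4p4 (K : fieldType) (n : nat) (gens : seq (mon n)) :
  matroidal (fun m => gen_ideal gens m) ->
  generated_in_degree (fun m => gen_ideal gens m) 2 ->
  forall k : nat, matroidal (HS K gens k).
Proof.
move=> HM HD k.
split; last first.
  move=> u /(mingen_HS K HM HD) [S [_ ->]] i; rewrite ffunE.
  by case: (i \in S).
split.
  exists k.+2 => u /(mingen_HS K HM HD) [S [/and3P [/eqP cS _ _] ->]].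
  by rewrite mdeg_indic.
move=> u v /(mingen_HS K HM HD) [G [vG ->]] /(mingen_HS K HM HD) [H [vH ->]] i.
rewrite !ffunE; case iH: (i \in H); case iG: (i \in G) => // _.
have [j [jH jG vj]] := exch_valid HM HD vG vH iG (negbT iH).
exists j; split; first by rewrite !ffunE jH (negbTE jG).
rewrite mexch_indic //; apply/(mingen_HS K HM HD).
by exists (j |: (G :\ i)).
Qed.
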